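(* Let $X$ be a path-connected uniform space with base point $x_0$. Then the uniform structure of $X$ is generated by the end-point projection $\pi_X\colon\widetilde X\to X$ if and only if for each entourage $E$ of $X$ there is an entourage $F$ of $X$ such that for every $x\in X$ any two points of $B(x,F)$ can be joined by a path contained in $B(x,E)$.
   Context: $B(x,E)=\{y:(x,y)\in E\}$; $f(E)=\{(f(x),f(y)):(x,y)\in E\}$. A surjection $f\colon Z\to X$ from a uniform space generates the uniform structure of $X$ if $\{f(E)\}$, $E$ an entourage of $Z$, is a base of the uniform structure of $X$. $\widetilde X$ is the set of homotopy classes rel. end-points of paths in $X$ starting at $x_0$, and $\pi_X([\alpha])=\alpha(1)$. $\widetilde X$ carries the basic uniform structure with base $\{E^\ast\}$, $E$ an entourage of $X$, where $E^\ast$ is the set of pairs $([\alpha],[\beta])$ such that $\alpha^{-1}\ast\beta$ is homotopic rel. end-points to a path contained in $B(z,E)$ for some $z\in X$. *)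

(* Defs.v *)
From Stdlib Require Import Reals.
Open Scope R_scope.
Set Implicit Arguments.

Record UniformSpace := {
  carrier :> Type;
  entourage : (carrier -> carrier -> Prop) -> Prop;
  ent_full : entourage (fun _ _ => True);
  ent_super : forall E F : carrier -> carrier -> Prop,
      entourage E -> (forall x y, E x y -> F x y) -> entourage F;
  ent_inter : forall E F, entourage E -> entourage F ->
      entourage (fun x y => E x y /\ F x y);
  ent_refl : forall E, entourage E -> forall x, E x x;
  ent_sym : forall E, entourage E -> entourage (fun x y => E y x);
  ent_comp : forall E, entourage E ->
      exists F, entourage F /\ forall x y z, F x y -> F y z -> E x z
}.

Definition ball {X : Type} (x : X) (E : X -> X -> Prop) : X -> Prop := fun y => E x y.

Definition in01 (t : R) : Prop := 0 <= t <= 1.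

(** A path: a map [0,1] -> X continuous for the uniform topology
    (values outside [0,1] are irrelevant). *)
Definition is_path {X : UniformSpace} (a : R -> X) : Prop :=
  forall t, in01 t -> forall E, entourage X E ->
    exists d, d > 0 /\ forall s, in01 s -> Rabs (s - t) < d -> E (a t) (a s).

Definition homotopic_rel {X : UniformSpace} (a b : R -> X) : Prop :=
  exists H : R -> R -> X,
    (forall t s E, in01 t -> in01 s -> entourage X E ->
       exists d, d > 0 /\ forall t' s', in01 t' -> in01 s' ->
         Rabs (t' - t) < d -> Rabs (s' - s) < d -> E (H t s) (H t' s')) /\
    (forall t, in01 t -> H t 0 = a t /\ H t 1 = b t) /\
    (forall s, in01 s -> H 0 s = a 0 /\ H 1 s = a 1).

Definition path_rev {X : Type} (a : R -> X) : R -> X := fun t => a (1 - t).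

Definition path_concat {X : Type} (a b : R -> X) : R -> X :=
  fun t => if Rle_dec t (1/2) then a (2 * t) else b (2 * t - 1).

Definition path_connected (X : UniformSpace) : Prop :=
  forall x y : X, exists a : R -> X, is_path a /\ a 0 = x /\ a 1 = y.

(** Representatives of points of X~: paths in X starting at x0. *)
Definition PathSp (X : UniformSpace) (x0 : X) : Type :=
  { a : R -> X | is_path a /\ a 0 = x0 }.

Definition star_ent {X : UniformSpace} (x0 : X) (E : X -> X -> Prop)
  (p q : PathSp X x0) : Prop :=
  exists (z : X) (g : R -> X), is_path g /\
    homotopic_rel (path_concat (path_rev (proj1_sig p)) (proj1_sig q)) g /\
    forall t, in01 t -> ball z E (g t).

Definition ent_tilde (X : UniformSpace) (x0 : X) (D : PathSp X x0 -> PathSp X x0 -> Prop)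
  : Prop :=
  exists E, entourage X E /\ forall p q, @star_ent X x0 E p q -> D p q.

Definition pi_X {X : UniformSpace} (x0 : X) (p : PathSp X x0) : X := proj1_sig p 1.

Definition image_rel {Z X : Type} (f : Z -> X) (D : Z -> Z -> Prop) : X -> X -> Prop :=
  fun x y => exists p q, D p q /\ f p = x /\ f q = y.

Definition generates {Z X : Type} (entZ : (Z -> Z -> Prop) -> Prop)
  (entX : (X -> X -> Prop) -> Prop) (f : Z -> X) : Prop :=
  (forall x, exists z, f z = x) /\
  (forall D, entZ D -> entX (image_rel f D)) /\
  (forall U, entX U -> exists D, entZ D /\ forall x y, image_rel f D x y -> U x y).

(* Main.v *)
Require Import Defs.
From Stdlib Require Import Reals Lra.
Open Scope R_scope.

Definition clamp (u : R) : R := Rmax 0 (Rmin 1 u).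

Lemma clamp_in01 u : in01 (clamp u).
Proof. unfold clamp, in01, Rmax, Rmin; repeat destruct Rle_dec; lra. Qed.

Lemma clamp_id u : in01 u -> clamp u = u.
Proof. unfold clamp, in01, Rmax, Rmin; intros; repeat destruct Rle_dec; lra. Qed.

Lemma clamp_lip a b : Rabs (clamp a - clamp b) <= Rabs (a - b).
Proof. unfold clamp, Rmax, Rmin; repeat destruct Rle_dec; split_Rabs; lra. Qed.

Lemma Rmax_lip a b a' b' : Rabs (Rmax a b - Rmax a' b') <= Rabs (a - a') + Rabs (b - b').
Proof. unfold Rmax; repeat destruct Rle_dec; split_Rabs; lra. Qed.

Definition gcont {X : UniformSpace} (f : R -> R -> X) : Prop :=
  forall t s E, entourage X E -> exists d, d > 0 /\ forall t' s',
    Rabs (t' - t) < d -> Rabs (s' - s) < d -> E (f t s) (f t' s').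

Definition concat2 {X : Type} (f g : R -> R -> X) : R -> R -> X :=
  fun t s => if Rle_dec t (1/2) then f (2 * t) s else g (2 * t - 1) s.

Lemma gcont_path {X : UniformSpace} (p : R -> X) (phi : R -> R -> R) :
  is_path p ->
  (forall t s t' s', Rabs (phi t' s' - phi t s) <= Rabs (t' - t) + Rabs (s' - s)) ->
  gcont (fun t s => p (clamp (phi t s))).
Proof.
  intros Hp Hphi t s E HE.
  destruct (Hp _ (clamp_in01 (phi t s)) E HE) as [d [Hd H]].
  exists (d/2); split; [lra|]. intros t' s' H1 H2.
  apply H; [apply clamp_in01|].
  eapply Rle_lt_trans; [apply clamp_lip|].
  eapply Rle_lt_trans; [apply Hphi|]. lra.
Qed.

Lemma concat2_gcont {X : UniformSpace} (f g : R -> R -> X) :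
  gcont f -> gcont g -> (forall s, f 1 s = g 0 s) -> gcont (concat2 f g).
Proof.
  intros Hf Hg Hfg t s E HE.
  destruct (Rtotal_order t (1/2)) as [Hlt|[Heq|Hgt]].
  - destruct (Hf (2*t) s E HE) as [d [Hd H]].
    exists (Rmin (d/2) (1/2 - t)); split.
    { apply Rmin_case; lra. }
    intros t' s' H1 H2.
    assert (A1 : Rabs (t'-t) < d/2) by (eapply Rlt_le_trans; [exact H1|apply Rmin_l]).
    assert (A2 : Rabs (t'-t) < 1/2 - t) by (eapply Rlt_le_trans; [exact H1|apply Rmin_r]).
    assert (A3 : Rabs (s'-s) < d/2) by (eapply Rlt_le_trans; [exact H2|apply Rmin_l]).
    unfold concat2. destruct (Rle_dec t (1/2)); [|lra].
    destruct (Rle_dec t' (1/2)); [| exfalso; apply n; split_Rabs; lra].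
    apply H; split_Rabs; lra.
  - subst t.
    destruct (Hf 1 s E HE) as [d1 [Hd1 H1]].
    destruct (Hg 0 s E HE) as [d2 [Hd2 H2]].
    exists (Rmin d1 d2 / 2); split.
    { apply Rmin_case; lra. }
    intros t' s' K1 K2.
    assert (M1 := Rmin_l d1 d2). assert (M2 := Rmin_r d1 d2).
    assert (Rmin d1 d2 > 0) by (apply Rmin_case; lra).
    unfold concat2. destruct (Rle_dec (1/2) (1/2)); [|lra].
    replace (2 * (1/2)) with 1 by field.
    destruct (Rle_dec t' (1/2)).
    + apply H1; split_Rabs; lra.
    + rewrite Hfg. apply H2; split_Rabs; lra.
  - destruct (Hg (2*t-1) s E HE) as [d [Hd H]].
    exists (Rmin (d/2) (t - 1/2)); split.
    { apply Rmin_case; lra. }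
    intros t' s' H1 H2.
    assert (A1 : Rabs (t'-t) < d/2) by (eapply Rlt_le_trans; [exact H1|apply Rmin_l]).
    assert (A2 : Rabs (t'-t) < t - 1/2) by (eapply Rlt_le_trans; [exact H1|apply Rmin_r]).
    assert (A3 : Rabs (s'-s) < d/2) by (eapply Rlt_le_trans; [exact H2|apply Rmin_l]).
    unfold concat2. destruct (Rle_dec t (1/2)); [lra|].
    destruct (Rle_dec t' (1/2)); [ split_Rabs; lra |].
    apply H; split_Rabs; lra.
Qed.

Lemma gcont_is_path {X : UniformSpace} (a : R -> X) (b : R -> R -> X) c :
  gcont b -> (forall t, in01 t -> a t = b t c) -> is_path a.
Proof.
  intros Hb Hab t Ht E HE.
  destruct (Hb t c E HE) as [d [Hd H]].
  exists d; split; [exact Hd|]. intros s Hs Hst.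
  rewrite (Hab t Ht), (Hab s Hs). apply H; [exact Hst|].
  replace (c - c) with 0 by ring. rewrite Rabs_R0; lra.
Qed.

Lemma path_join {X : UniformSpace} (g1 g2 : R -> X) :
  is_path g1 -> is_path g2 -> g1 0 = g2 0 -> is_path (path_concat (path_rev g1) g2).
Proof.
  intros H1 H2 H12.
  apply (@gcont_is_path _ _ (concat2 (fun u s => g1 (clamp (1-u))) (fun u s => g2 (clamp u))) 0).
  - apply concat2_gcont.
    + apply (gcont_path g1 (fun u s => 1 - u)); [exact H1|]. intros; split_Rabs; lra.
    + apply (gcont_path g2 (fun u s => u)); [exact H2|]. intros; split_Rabs; lra.
    + intros s. replace (1-1) with 0 by ring. rewrite clamp_id by (unfold in01; lra). exact H12.
  - intros t Ht. unfold in01 in Ht. unfold path_concat, concat2, path_rev.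
    destruct (Rle_dec t (1/2)).
    + rewrite clamp_id; [reflexivity| unfold in01; lra].
    + rewrite clamp_id; [reflexivity| unfold in01; lra].
Qed.

Lemma path_cat {X : UniformSpace} (g1 g2 : R -> X) :
  is_path g1 -> is_path g2 -> g1 1 = g2 0 -> is_path (path_concat g1 g2).
Proof.
  intros H1 H2 H12.
  apply (@gcont_is_path _ _ (concat2 (fun u s => g1 (clamp u)) (fun u s => g2 (clamp u))) 0).
  - apply concat2_gcont.
    + apply (gcont_path g1 (fun u s => u)); [exact H1|]. intros; split_Rabs; lra.
    + apply (gcont_path g2 (fun u s => u)); [exact H2|]. intros; split_Rabs; lra.
    + intros s. rewrite !clamp_id by (unfold in01; lra). exact H12.
  - intros t Ht. unfold in01 in Ht. unfold path_concat, concat2.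
    destruct (Rle_dec t (1/2)).
    + rewrite clamp_id; [reflexivity| unfold in01; lra].
    + rewrite clamp_id; [reflexivity| unfold in01; lra].
Qed.

Lemma star_ends {X : UniformSpace} (x0 : X) E p q :
  @star_ent X x0 E p q -> exists w g, is_path g /\ g 0 = proj1_sig p 1 /\
    g 1 = proj1_sig q 1 /\ forall t, in01 t -> E w (g t).
Proof.
  intros [w [g [Hg [[H [_ [Hts Hs]]] Hb]]]].
  exists w, g. split; [exact Hg|]. split; [|split; [|exact Hb]].
  - destruct (Hts 0) as [_ A]; [unfold in01; lra|].
    destruct (Hs 1) as [B _]; [unfold in01; lra|].
    rewrite <- A, B. unfold path_concat, path_rev.
    destruct (Rle_dec 0 (1/2)); [|lra]. f_equal; ring.
  - destruct (Hts 1) as [_ A]; [unfold in01; lra|].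
    destruct (Hs 1) as [_ B]; [unfold in01; lra|].
    rewrite <- A, B. unfold path_concat, path_rev.
    destruct (Rle_dec 1 (1/2)); [lra|]. f_equal; ring.
Qed.

Lemma sym_half {X : UniformSpace} (U : X -> X -> Prop) : entourage X U ->
  exists E, entourage X E /\ forall w a b, E w a -> E w b -> U a b.
Proof.
  intros HU. destruct (ent_comp _ _ HU) as [F [HF HFF]].
  exists (fun x y => F x y /\ F y x). split.
  - apply ent_inter; [exact HF| apply ent_sym; exact HF].
  - intros w a b [_ A] [B _]. eapply HFF; eauto.
Qed.

Theorem mainTheorem4 (X : UniformSpace) (x0 : X) (hX : path_connected X) :
  generates (@ent_tilde X x0) (entourage X) (@pi_X X x0) <->
  (forall E, entourage X E -> exists F, entourage X F /\
     forall x y z : X, ball x F y -> ball x F z ->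
       exists g : R -> X, is_path g /\ g 0 = y /\ g 1 = z /\
         forall t, in01 t -> ball x E (g t)).
Proof.
  split.
  - intros [Hsurj [Himg Hsub]] E HE.
    destruct (sym_half _ HE) as [E1 [HE1 HE1c]].
    exists (image_rel (@pi_X X x0) (@star_ent X x0 E1)). split.
    + apply Himg. exists E1. split; [exact HE1| tauto].
    + intros x y z [p [q [Hpq [Hp Hq]]]] [p' [q' [Hpq' [Hp' Hq']]]].
      destruct (star_ends _ _ _ _ Hpq) as [w [g [Hg [Hg0 [Hg1 Hgb]]]]].
      destruct (star_ends _ _ _ _ Hpq') as [w' [g' [Hg' [Hg0' [Hg1' Hgb']]]]].
      unfold pi_X in *.
      exists (path_concat (path_rev g) g'). split; [|split; [|split]].
      * apply path_join; auto. congruence.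
      * unfold path_concat, path_rev. destruct (Rle_dec 0 (1/2)); [|lra].
        replace (1 - 2*0) with 1 by ring. congruence.
      * unfold path_concat. destruct (Rle_dec 1 (1/2)); [lra|].
        replace (2*1-1) with 1 by ring. congruence.
      * intros t Ht. unfold in01 in Ht. unfold ball, path_concat, path_rev.
        destruct (Rle_dec t (1/2)).
        -- apply (HE1c w); [| apply Hgb; unfold in01; lra].
           rewrite <- Hp, <- Hg0. apply Hgb; unfold in01; lra.
        -- apply (HE1c w'); [| apply Hgb'; unfold in01; lra].
           rewrite <- Hp', <- Hg0'. apply Hgb'; unfold in01; lra.
  - intros Hcond. split; [|split].
    + intros x. destruct (hX x0 x) as [p [Hp [Hp0 Hp1]]].
      exists (exist (fun a => is_path a /\ a 0 = x0) p (conj Hp Hp0)).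
      unfold pi_X; simpl; exact Hp1.
    + intros D [E [HE HD]].
      destruct (Hcond E HE) as [F [HF HFc]].
      apply (ent_super _ _ _ HF). intros x y Hxy.
      destruct (hX x0 x) as [p [Hp [Hp0 Hp1]]].
      destruct (HFc x x y (ent_refl _ _ HF x) Hxy) as [g [Hg [Hg0 [Hg1 Hgb]]]].
      assert (Hq : is_path (path_concat p g)) by (apply path_cat; [exact Hp|exact Hg|congruence]).
      assert (Hq0 : path_concat p g 0 = x0).
      { unfold path_concat. destruct (Rle_dec 0 (1/2)); [|lra].
        replace (2*0) with 0 by ring. exact Hp0. }
      set (P := exist (fun a => is_path a /\ a 0 = x0) p (conj Hp Hp0)).
      set (Q := exist (fun a => is_path a /\ a 0 = x0) (path_concat p g) (conj Hq Hq0)).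
      exists P, Q. split; [|split].
      * apply HD. unfold star_ent; simpl.
        set (H := concat2 (fun u s => p (clamp (Rmax (1-u) s)))
                    (concat2 (fun u s => p (clamp (Rmax u s))) (fun u s => g (clamp u)))).
        assert (HH : gcont H).
        { apply concat2_gcont; [| apply concat2_gcont |].
          - apply (gcont_path p (fun u s => Rmax (1-u) s)); [exact Hp|].
            intros. eapply Rle_trans; [apply Rmax_lip|]. split_Rabs; lra.
          - apply (gcont_path p (fun u s => Rmax u s)); [exact Hp|].
            intros. apply Rmax_lip.
          - apply (gcont_path g (fun u s => u)); [exact Hg|]. intros; split_Rabs; lra.
          - intros s. assert (C1 : clamp (Rmax 1 s) = 1)
              by (unfold clamp, Rmax, Rmin; repeat destruct Rle_dec; lra).
            rewrite C1, clamp_id by (unfold in01; lra). congruence.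
          - intros s. unfold concat2. destruct (Rle_dec 0 (1/2)); [|lra].
            replace (1-1) with 0 by ring. replace (2*0) with 0 by ring. reflexivity. }
        exists x, (fun t => H t 1). split; [|split].
        -- apply (@gcont_is_path _ _ H 1); [exact HH|]. reflexivity.
        -- exists H. split; [|split].
           ++ intros t s E0 _ _ HE0. destruct (HH t s E0 HE0) as [d [Hd Hd']].
              exists d. split; [exact Hd|]. intros; apply Hd'; auto.
           ++ intros t Ht. split; [|reflexivity]. unfold in01 in Ht.
              unfold H, concat2, path_concat, path_rev.
              destruct (Rle_dec t (1/2)).
              ** f_equal. rewrite Rmax_left by lra. apply clamp_id; unfold in01; lra.
              ** destruct (Rle_dec (2*t-1) (1/2)).
                 --- f_equal. rewrite Rmax_left by lra. apply clamp_id; unfold in01; lra.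
                 --- f_equal. apply clamp_id; unfold in01; lra.
           ++ intros s Hs. unfold in01 in Hs. unfold H, concat2, path_concat, path_rev.
              destruct (Rle_dec 0 (1/2)); [|lra].
              destruct (Rle_dec 1 (1/2)); [lra|].
              destruct (Rle_dec (2*1-1) (1/2)); [lra|].
              split; f_equal.
              ** rewrite Rmax_left by lra. rewrite clamp_id; [ring| unfold in01; lra].
              ** apply clamp_id; unfold in01; lra.
        -- intros t _. unfold ball, H, concat2.
           destruct (Rle_dec t (1/2)).
           ++ assert (C1 : forall a, clamp (Rmax a 1) = 1)
                by (intros; unfold clamp, Rmax, Rmin; repeat destruct Rle_dec; lra).
              rewrite C1, Hp1. apply (ent_refl _ _ HE).
           ++ destruct (Rle_dec (2*t-1) (1/2)).
              ** assert (C1 : forall a, clamp (Rmax a 1) = 1)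
                   by (intros; unfold clamp, Rmax, Rmin; repeat destruct Rle_dec; lra).
                 rewrite C1, Hp1. apply (ent_refl _ _ HE).
              ** apply Hgb, clamp_in01.
      * unfold pi_X; simpl; exact Hp1.
      * unfold pi_X; simpl. unfold path_concat. destruct (Rle_dec 1 (1/2)); [lra|].
        replace (2*1-1) with 1 by ring. exact Hg1.
    + intros U HU. destruct (sym_half _ HU) as [E [HE HEc]].
      exists (@star_ent X x0 E). split.
      * exists E. split; [exact HE| tauto].
      * intros x y [p [q [Hpq [Hp Hq]]]].
        destruct (star_ends _ _ _ _ Hpq) as [w [g [Hg [Hg0 [Hg1 Hgb]]]]].
        unfold pi_X in *. subst x y.
        apply (HEc w); [rewrite <- Hg0 | rewrite <- Hg1]; apply Hgb; unfold in01; lra.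
Qed.
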